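(* Assume $\ker(K)\cap\ker(D)=\{0\}$. Fix $\delta\ge0$ and a vector of observations $y^\delta=Kx^{GT}+e$ with $\|e\|_2\le\delta$. Let $\{\Psi_k\}_{k\in\mathbb{N}}$ be a sequence of reconstructors such that one of the following holds: 1. $\|\Psi_k(y^\delta)-x^{GT}\|_1\to0$ as $k\to\infty$; 2. $\|\,|D\Psi_k(y^\delta)|-|Dx^{GT}|\,\|_1\to0$ as $k\to\infty$. For each $k$ let $x^*_{\Psi_k,\delta}$ be the unique minimizer over $\mathcal{X}$ of $\mathcal{J}_{\Psi_k,\delta}(x)=\|Kx-y^\delta\|_2^2+\lambda\|w(\Psi_k(y^\delta))\odot|Dx|\|_1$, and let $x^*_{GT,\delta}$ denote the unique minimizer over $\mathcal{X}$ of $\mathcal{J}_{GT,\delta}(x)=\|Kx-y^\delta\|_2^2+\lambda\|w(x^{GT})\odot|Dx|\|_1$. Then $\{x^*_{\Psi_k,\delta}\}_{k\in\mathbb{N}}$ has a convergent subsequence whose limit is $x^*_{GT,\delta}$.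
   Context: Let $K\in\mathbb{R}^{m\times n}$ with $m\le n$, and let $D_h,D_v\in\mathbb{R}^{n\times n}$ be the discrete horizontal and vertical difference operators; $Dx=\begin{bmatrix}D_hx\\ D_vx\end{bmatrix}\in\mathbb{R}^{2n}$, and $|Dx|\in\mathbb{R}^n$, $(|Dx|)_i=\sqrt{(D_hx)_i^2+(D_vx)_i^2}$. $\mathcal{X}=\{x\in\mathbb{R}^n: x_i\ge 0\ \forall i\}$ and $x^{GT}\in\mathcal{X}$ is the ground truth. Fix $\lambda>0$, $\eta>0$, $p\in(0,1)$, and for $\tilde x\in\mathbb{R}^n$ define $(w(\tilde{x}))_i=\big(\eta/\sqrt{\eta^2+(|D\tilde{x}|)_i^2}\big)^{1-p}$. A reconstructor is a Lipschitz continuous map $\Psi:\mathbb{R}^m\to\mathbb{R}^n$. $\odot$ is the entrywise product. *)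

(* Defs.v *)
From HB Require Import structures.
From mathcomp Require Import all_boot all_order all_algebra.
From mathcomp Require Import all_classical all_reals all_analysis.
Set Implicit Arguments. Unset Strict Implicit. Unset Printing Implicit Defensive.
Import Order.TTheory GRing.Theory Num.Theory.
Import numFieldNormedType.Exports.
Local Open Scope ring_scope.

Section Defs.
Variable R : realType.

Definition l1norm (k : nat) (v : 'cV[R]_k) : R := \sum_(i < k) `|v i 0|.
Definition l2norm (k : nat) (v : 'cV[R]_k) : R := Num.sqrt (\sum_(i < k) (v i 0) ^+ 2).

(* |Dx|, with Dx = [Dh x; Dv x] *)
Definition absD (n : nat) (Dh Dv : 'M[R]_n) (x : 'cV[R]_n) : 'cV[R]_n :=
  \col_i Num.sqrt (((Dh *m x) i 0) ^+ 2 + ((Dv *m x) i 0) ^+ 2).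

Definition hadamard (n : nat) (a b : 'cV[R]_n) : 'cV[R]_n := \col_i (a i 0 * b i 0).

Definition weight (n : nat) (Dh Dv : 'M[R]_n) (eta p : R) (xt : 'cV[R]_n) : 'cV[R]_n :=
  \col_i powR (eta / Num.sqrt (eta ^+ 2 + (absD Dh Dv xt i 0) ^+ 2)) (1 - p).

Definition Jfun (m n : nat) (K : 'M[R]_(m, n)) (Dh Dv : 'M[R]_n) (lam eta p : R)
  (y : 'cV[R]_m) (xt : 'cV[R]_n) (x : 'cV[R]_n) : R :=
  (l2norm (K *m x - y)) ^+ 2 + lam * l1norm (hadamard (weight Dh Dv eta p xt) (absD Dh Dv x)).

Definition nonneg_orthant (n : nat) (x : 'cV[R]_n) : Prop := forall i, 0 <= x i 0.

Definition is_minimizer_on (n : nat) (C : 'cV[R]_n -> Prop) (F : 'cV[R]_n -> R) (x : 'cV[R]_n) :=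
  C x /\ (forall z, C z -> F x <= F z).

Definition is_unique_minimizer_on (n : nat) (C : 'cV[R]_n -> Prop) (F : 'cV[R]_n -> R) (x : 'cV[R]_n) :=
  is_minimizer_on C F x /\ (forall z, is_minimizer_on C F z -> z = x).

Definition lipschitz_map (m n : nat) (Psi : 'cV[R]_m -> 'cV[R]_n) : Prop :=
  exists L : R, 0 <= L /\ forall a b, l2norm (Psi a - Psi b) <= L * l2norm (a - b).

End Defs.

(* Main.v *)
Require Import Defs.
From HB Require Import structures.
From mathcomp Require Import all_boot all_order all_algebra.
From mathcomp Require Import all_classical all_reals all_analysis.
From mathcomp Require Import lra.
Import Order.TTheory GRing.Theory Num.Theory.
Import numFieldNormedType.Exports.
Local Open Scope classical_set_scope.
Local Open Scope ring_scope.
Section Aux.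
Variable R : realType.

Lemma cvg_sumO n (f : 'I_n -> nat -> R) (l : 'I_n -> R) :
  (forall i, f i @ \oo --> l i) ->
  (fun k => \sum_(i < n) f i k) @ \oo --> \sum_(i < n) l i.
Proof.
move=> H.
exact: (@cvg_big R 'I_n +%R 0 predT add_continuous nat \oo (index_enum _) f l _ (fun i _ => H i)).
Qed.

Definition ecvg {n} (v : nat -> 'cV[R]_n) (l : 'cV[R]_n) :=
  forall i, (fun k => v k i 0) @ \oo --> l i 0.

Lemma ecvg_mul m n (A : 'M[R]_(m,n)) v l : ecvg v l ->
  ecvg (fun k => A *m v k) (A *m l).
Proof.
move=> H i; rewrite mxE; under eq_cvg do rewrite mxE.
apply: cvg_sumO => j; apply: cvgM; [exact: cvg_cst | exact: H].
Qed.

Lemma ecvg_absD n (Dh Dv : 'M[R]_n) v l : ecvg v l ->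
  ecvg (fun k => absD Dh Dv (v k)) (absD Dh Dv l).
Proof.
move=> H i; rewrite mxE; under eq_cvg do rewrite mxE.
apply: (continuous_cvg _ (@sqrt_continuous R _)).
have H1 := @ecvg_mul _ _ Dh _ _ H i; have H2 := @ecvg_mul _ _ Dv _ _ H i.
by apply: cvgD; apply: cvgM.
Qed.

Lemma cvg_weightfun (eta p : R) (t : nat -> R) (l : R) : 0 < eta ->
  t @ \oo --> l ->
  (fun k => powR (eta / Num.sqrt (eta ^+ 2 + t k ^+ 2)) (1 - p)) @ \oo -->
  powR (eta / Num.sqrt (eta ^+ 2 + l ^+ 2)) (1 - p).
Proof.
move=> eta0 H.
have pos : forall s : R, 0 < eta / Num.sqrt (eta ^+ 2 + s ^+ 2).
  move=> s; rewrite divr_gt0 // sqrtr_gt0; apply: ltr_wpDr; first exact: sqr_ge0.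
  by rewrite exprn_gt0.
have E : forall s : R, powR (eta / Num.sqrt (eta ^+ 2 + s ^+ 2)) (1 - p) =
  expR ((1 - p) * ln (eta / Num.sqrt (eta ^+ 2 + s ^+ 2))).
  by move=> s; rewrite /powR gt_eqF.
rewrite E; under eq_cvg do rewrite E.
apply: (continuous_cvg _ (@continuous_expR R _)).
apply: cvgM; first exact: cvg_cst.
apply: (continuous_cvg _ (continuous_ln (pos l))).
apply: cvgM; first exact: cvg_cst.
apply: cvgV; first by rewrite gt_eqF // sqrtr_gt0 ltr_wpDr ?sqr_ge0 ?exprn_gt0.
apply: (continuous_cvg _ (@sqrt_continuous R _)).
apply: cvgD; first exact: cvg_cst.
exact: cvgM.
Qed.


Lemma cvg_ext (f g : nat -> R) (l : R) : (forall k, f k = g k) -> f @ \oo --> l -> g @ \oo --> l.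
Proof. by move=> H; rewrite (_ : g = f) //; apply/funext => k; rewrite H. Qed.

Lemma subE n (a b : 'cV[R]_n) i : (a - b) i 0 = a i 0 - b i 0.
Proof. by rewrite !mxE. Qed.

Lemma hadE n (a b : 'cV[R]_n) i : hadamard a b i 0 = a i 0 * b i 0.
Proof. by rewrite mxE. Qed.

Lemma weightE n (Dh Dv : 'M[R]_n) eta p xt i : weight Dh Dv eta p xt i 0 =
  powR (eta / Num.sqrt (eta ^+ 2 + (absD Dh Dv xt i 0) ^+ 2)) (1 - p).
Proof. by rewrite mxE. Qed.

Lemma absDE n (Dh Dv : 'M[R]_n) x i : absD Dh Dv x i 0 =
  Num.sqrt (((Dh *m x) i 0) ^+ 2 + ((Dv *m x) i 0) ^+ 2).
Proof. by rewrite mxE. Qed.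

Lemma l2sq k (v : 'cV[R]_k) : l2norm v ^+ 2 = \sum_(i < k) (v i 0) ^+ 2.
Proof. by rewrite /l2norm sqr_sqrtr // sumr_ge0 // => i _; exact: sqr_ge0. Qed.

Lemma cvg_J m n (K : 'M[R]_(m, n)) Dh Dv lam eta p y (xt : nat -> 'cV[R]_n) xtl
  (x : nat -> 'cV[R]_n) xl : 0 < eta ->
  (forall i, (fun k => absD Dh Dv (xt k) i 0) @ \oo --> absD Dh Dv xtl i 0) ->
  ecvg x xl ->
  (fun k => Jfun K Dh Dv lam eta p y (xt k) (x k)) @ \oo -->
  Jfun K Dh Dv lam eta p y xtl xl.
Proof.
move=> eta0 Hw Hx; rewrite /Jfun l2sq; under eq_cvg do rewrite l2sq.
apply: cvgD.
  apply: cvg_sumO => i /=.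
  rewrite subE expr2.
  apply: (@cvg_ext (fun k => ((K *m x k) i 0 - y i 0) * ((K *m x k) i 0 - y i 0))).
    by move=> k; rewrite subE expr2.
  have HK := @ecvg_mul _ _ K _ _ Hx i.
  by apply: cvgM; apply: cvgB => //; exact: cvg_cst.
apply: cvgM; first exact: cvg_cst.
rewrite /l1norm; apply: cvg_sumO => i.
rewrite hadE; under eq_cvg do rewrite hadE.
apply: cvg_norm; apply: cvgM.
  rewrite weightE; under eq_cvg do rewrite weightE.
  exact: cvg_weightfun.
exact: (@ecvg_absD _ Dh Dv _ _ Hx).
Qed.

Lemma le_sum_entry k (f : 'I_k -> R) i : (forall j, 0 <= f j) -> f i <= \sum_(j < k) f j.
Proof. by move=> H; rewrite (bigD1 i) //= lerDl sumr_ge0. Qed.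

Lemma abs_le_sq1 (a : R) : `|a| <= a ^+ 2 + 1.
Proof.
rewrite -real_normK ?num_real //.
have h := normr_ge0 a; set t := `|a| in h *; nra.
Qed.

Lemma le_abs_sqrt (a b : R) : `|a| <= Num.sqrt (a ^+ 2 + b ^+ 2).
Proof.
rewrite -sqrtr_sqr; apply: ler_wsqrtr.
by rewrite lerDl sqr_ge0.
Qed.

Lemma mul_bound m n (A : 'M[R]_(m, n)) (v : 'cV[R]_n) T j :
  0 <= T -> (forall i, `|v i 0| <= T) ->
  `|(A *m v) j 0| <= (\sum_(j < m) \sum_(i < n) `|A j i|) * T.
Proof.
move=> T0 Hv; rewrite mxE.
apply: (le_trans (ler_norm_sum _ _ _)).
apply: (@le_trans _ _ ((\sum_(i < n) `|A j i|) * T)).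
  rewrite mulr_suml; apply: ler_sum => i _; rewrite normrM.
  by apply: ler_wpM2l => //.
apply: ler_wpM2r => //; apply: (@le_sum_entry m (fun j => \sum_(i < n) `|A j i|) j).
by move=> l; apply: sumr_ge0 => i _.
Qed.


Lemma addE n (a b : 'cV[R]_n) i : (a + b) i 0 = a i 0 + b i 0.
Proof. by rewrite !mxE. Qed.

Lemma left_inv m n (K : 'M[R]_(m,n)) (Dh Dv : 'M[R]_n) :
  (forall x : 'cV[R]_n, K *m x = 0 -> Dh *m x = 0 -> Dv *m x = 0 -> x = 0) ->
  exists B1 : 'M[R]_(n, m), exists B2 : 'M[R]_n, exists B3 : 'M[R]_n,
    forall x : 'cV[R]_n, x = B1 *m (K *m x) + B2 *m (Dh *m x) + B3 *m (Dv *m x).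
Proof.
move=> H.
pose S := col_mx K (col_mx Dh Dv).
have fr : row_full S.
  have : row_free S^T.
    apply: inj_row_free => v Hv.
    have := congr1 trmx Hv; rewrite trmx_mul trmxK trmx0 /S !mul_col_mx.
    move=> /eqP; rewrite !col_mx_eq0 => /andP[/eqP h1 /andP[/eqP h2 /eqP h3]].
    by rewrite -[v]trmxK (H _ h1 h2 h3) trmx0.
  by rewrite /row_free /row_full mxrank_tr.
case/row_fullP: fr => B HB.
exists (lsubmx B), (lsubmx (rsubmx B)), (rsubmx (rsubmx B)) => x.
have : x = B *m (S *m x) by rewrite mulmxA HB mul1mx.
rewrite -[B]hsubmxK -[rsubmx B]hsubmxK /S !mul_col_mx !mul_row_col addrA.
by rewrite !hsubmxK.
Qed.

Lemma cvg_subseq (g : nat -> nat) (u : nat -> R) (l : R) :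
  (forall k, (k <= g k)%N) -> u @ \oo --> l -> (fun k => u (g k)) @ \oo --> l.
Proof.
move=> Hg Hu.
have Hg' : g @ \oo --> \oo.
  move=> P [N _ HN]; exists N => // k /= Nk; apply: HN; exact: leq_trans Nk (Hg k).
exact: (cvg_comp _ _ Hg' Hu).
Qed.

Lemma strict_mono (f : nat -> nat) : (forall k, (f k < f k.+1)%N) ->
  forall a b, (a < b)%N -> (f a < f b)%N.
Proof.
move=> Hf a; elim => // b IH; rewrite ltnS leq_eqVlt => /orP[/eqP->|/IH h].
  exact: Hf.
exact: ltn_trans h (Hf b).
Qed.

Lemma strict_ge (f : nat -> nat) : (forall k, (f k < f k.+1)%N) -> forall k, (k <= f k)%N.
Proof.
move=> Hf; elim => // k IH; exact: leq_ltn_trans IH (Hf k).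
Qed.

Lemma bw_vec n (u : nat -> 'cV[R]_n) (M : R) : (forall k i, `|u k i 0| <= M) ->
  exists f : nat -> nat, (forall k, (f k < f k.+1)%N) /\
    forall i, cvgn (fun k => u (f k) i 0).
Proof.
move=> H.
suff: forall j, (j <= n)%N -> exists f : nat -> nat, (forall k, (f k < f k.+1)%N) /\
    forall i : 'I_n, (i < j)%N -> cvgn (fun k => u (f k) i 0).
  move/(_ n (leqnn n)) => [f [Hf Hc]]; exists f; split => // i; exact: Hc i (ltn_ord i).
elim => [_|j IH Hj].
  by exists id; split => // i.
have [f [Hf Hc]] := IH (ltnW Hj).
have bnd : bounded_fun (fun k => u (f k) (Ordinal Hj) 0).
  exists M; split; first exact: num_real.
  by move=> z Mz k _ /=; rewrite (le_trans (H _ _)) // ltW.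
have [h hi hc] := bolzano_weierstrass bnd.
have hinc : forall k, (h k < h k.+1)%N.
  by move=> k; rewrite ltnNge -leEnat hi ltnn.
exists (f \o h); split.
  by move=> k /=; apply: strict_mono => //.
move=> i /= Hi; rewrite ltnS leq_eqVlt in Hi; case/orP: Hi => [/eqP Hi|Hi].
  have -> : i = Ordinal Hj by apply: val_inj.
  exact: hc.
apply/cvg_ex; exists (lim ((fun k => u (f k) i 0) @ \oo)).
exact: (@cvg_subseq h _ _ (@strict_ge h hinc) (Hc i Hi)).
Qed.

Lemma l1_ecvg n (v : nat -> 'cV[R]_n) l :
  (fun k => l1norm (v k - l)) @ \oo --> 0 -> ecvg v l.
Proof.
move=> /cvgrPdist_lt H i; apply/cvgrPdist_lt => e e0.
move: (H e e0); apply: filterS => k /=.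
rewrite sub0r normrN ger0_norm; last by apply: sumr_ge0 => j _.
move=> Hk; apply: le_lt_trans Hk.
rewrite distrC -subE /l1norm.
exact: (@le_sum_entry n (fun j => `|(v k - l) j 0|) i).
Qed.


Lemma J0 m n (K : 'M[R]_(m, n)) Dh Dv lam eta p (y : 'cV[R]_m) xt :
  Jfun K Dh Dv lam eta p y xt 0 = \sum_(i < m) (y i 0) ^+ 2.
Proof.
rewrite /Jfun mulmx0 sub0r l2sq.
have -> : l1norm (hadamard (weight Dh Dv eta p xt) (absD Dh Dv 0)) = 0.
  rewrite /l1norm big1 // => i _.
  by rewrite hadE absDE !mulmx0 !mxE expr0n /= addr0 sqrtr0 mulr0 normr0.
rewrite mulr0 addr0; apply: eq_bigr => i _; by rewrite mxE sqrrN.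
Qed.

End Aux.

Theorem corollary2 (R : realType) (m n : nat) (K : 'M[R]_(m, n)) (Dh Dv : 'M[R]_n)
  (lam eta p : R) (xGT : 'cV[R]_n) (delta : R) (e y : 'cV[R]_m)
  (Psi : nat -> 'cV[R]_m -> 'cV[R]_n) (xstar : nat -> 'cV[R]_n) (xstarGT : 'cV[R]_n) :
  (m <= n)%N ->
  0 < lam -> 0 < eta -> 0 < p -> p < 1 ->
  nonneg_orthant xGT ->
  (forall x : 'cV[R]_n, K *m x = 0 -> Dh *m x = 0 -> Dv *m x = 0 -> x = 0) ->
  0 <= delta -> y = K *m xGT + e -> l2norm e <= delta ->
  (forall k, lipschitz_map (Psi k)) ->
  ((fun k => l1norm (Psi k y - xGT)) @ \oo --> 0 \/
   (fun k => l1norm (absD Dh Dv (Psi k y) - absD Dh Dv xGT)) @ \oo --> 0) ->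
  (forall k, is_unique_minimizer_on (@nonneg_orthant R n)
               (Jfun K Dh Dv lam eta p y (Psi k y)) (xstar k)) ->
  is_unique_minimizer_on (@nonneg_orthant R n) (Jfun K Dh Dv lam eta p y xGT) xstarGT ->
  exists phi : nat -> nat, (forall k, (phi k < phi k.+1)%N) /\
    (fun k => l1norm (xstar (phi k) - xstarGT)) @ \oo --> 0.
Proof.
move=> mn lam0 eta0 p0 p1 xGT0 Hker d0 Hy He HPsi Hconv Hmin HminGT.
have Habs : forall i, (fun k => absD Dh Dv (Psi k y) i 0) @ \oo --> absD Dh Dv xGT i 0.
  case: Hconv => [H1|H2].
    exact: (@ecvg_absD R n Dh Dv _ _ (@l1_ecvg R n (fun k => Psi k y) xGT H1)).
  exact: (@l1_ecvg R n (fun k => absD Dh Dv (Psi k y)) (absD Dh Dv xGT) H2).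
pose wGT (i : 'I_n) : R := weight Dh Dv eta p xGT i 0.
have wGT0 : forall i, 0 < wGT i.
  move=> i; rewrite /wGT weightE; apply: powR_gt0.
  rewrite divr_gt0 // sqrtr_gt0; apply: ltr_wpDr; first exact: sqr_ge0.
  by rewrite exprn_gt0.
have Hw : forall i, (fun k => weight Dh Dv eta p (Psi k y) i 0) @ \oo --> wGT i.
  move=> i; rewrite /wGT weightE.
  apply: (@cvg_ext R (fun k => powR (eta / Num.sqrt (eta ^+ 2 +
     (absD Dh Dv (Psi k y) i 0) ^+ 2)) (1 - p))).
    by move=> k; rewrite weightE.
  exact: cvg_weightfun.
have Hev : \forall k \near \oo, forall i, wGT i / 2 < weight Dh Dv eta p (Psi k y) i 0.
  apply: filter_forall => i; apply: (cvgr_gt _ (Hw i)).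
  by rewrite ltr_pdivrMr // ltr_pMr // ltr1n.
have [N _ HN] := Hev.
pose Y := \sum_(i < m) (y i 0) ^+ 2.
have Y0 : 0 <= Y by apply: sumr_ge0 => i _; exact: sqr_ge0.
have HJ : forall k, Jfun K Dh Dv lam eta p y (Psi k y) (xstar k) <= Y.
  move=> k; have [[_ Hk] _] := Hmin k.
  apply: (le_trans (Hk 0 _)); last by rewrite (@J0 R m n K Dh Dv lam eta p y (Psi k y)).
  by move=> i; rewrite mxE.
have [B1 [B2 [B3 Hinv]]] := @left_inv R m n K Dh Dv Hker.
pose TK := Y + 1 + \sum_(i < m) `|y i 0|.
have TK0 : 0 <= TK.
  have : 0 <= \sum_(i < m) `|y i 0| by apply: sumr_ge0 => i _.
  rewrite /TK; lra.
pose TD := \sum_(i < n) Y / (lam * (wGT i / 2)).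
have TDt : forall i, 0 <= Y / (lam * (wGT i / 2)).
  move=> i; apply: divr_ge0 => //; apply: mulr_ge0; first exact: ltW.
  by apply: divr_ge0 => //; exact: ltW.
have TD0 : 0 <= TD by apply: sumr_ge0 => i _.
pose M := (\sum_(j < n) \sum_(i < m) `|B1 j i|) * TK +
          (\sum_(j < n) \sum_(i < n) `|B2 j i|) * TD +
          (\sum_(j < n) \sum_(i < n) `|B3 j i|) * TD.
have Hbnd : forall k i, `|xstar (k + N) i 0| <= M.
  move=> k j.
  move: (HJ (k + N)) (HN (k + N) (leq_addl _ _)).
  move: (xstar (k + N)) (Psi (k + N) y) => x xt HJk Hwk.
  rewrite /Jfun l2sq in HJk.
  set L1 := l1norm _ in HJk.
  have L10 : 0 <= L1 by apply: sumr_ge0 => i _.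
  have S0 : 0 <= \sum_(i < m) ((K *m x - y) i 0) ^+ 2.
    by apply: sumr_ge0 => i _; exact: sqr_ge0.
  have lL0 := mulr_ge0 (ltW lam0) L10.
  have hS : \sum_(i < m) ((K *m x - y) i 0) ^+ 2 <= Y by lra.
  have hL : lam * L1 <= Y by lra.
  have hK : forall i, `|(K *m x) i 0| <= TK.
    move=> i.
    have e1 : ((K *m x - y) i 0) ^+ 2 <= Y.
      apply: le_trans hS.
      exact: (@le_sum_entry R m (fun i => ((K *m x - y) i 0) ^+ 2) i (fun j => sqr_ge0 _)).
    have e2 := @abs_le_sq1 R ((K *m x - y) i 0).
    have e3 : `|y i 0| <= \sum_(i < m) `|y i 0|.
      exact: (@le_sum_entry R m (fun i => `|y i 0|) i (fun j => normr_ge0 _)).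
    have e4 : `|(K *m x) i 0| <= `|(K *m x - y) i 0| + `|y i 0|.
      by rewrite subE; have := ler_normD ((K *m x) i 0 - y i 0) (y i 0); rewrite subrK.
    rewrite /TK; lra.
  have hD : forall i, absD Dh Dv x i 0 <= TD.
    move=> i.
    have a0 : 0 <= absD Dh Dv x i 0 by rewrite absDE sqrtr_ge0.
    have w1 := Hwk i. have w0 := wGT0 i.
    have t1 : weight Dh Dv eta p xt i 0 * absD Dh Dv x i 0 <= L1.
      have := @le_sum_entry R n (fun j => `|hadamard (weight Dh Dv eta p xt) (absD Dh Dv x) j 0|) i (fun j => normr_ge0 _).
      rewrite hadE => h; exact: le_trans (ler_norm _) h.
    apply: le_trans (@le_sum_entry R n (fun i => Y / (lam * (wGT i / 2))) i TDt).
    rewrite ler_pdivlMr; last by apply: mulr_gt0 => //; apply: divr_gt0.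
    set c := wGT i / 2 in w1 *; set w := weight Dh Dv eta p xt i 0 in w1 t1 *.
    set a := absD Dh Dv x i 0 in a0 t1 *.
    have h1 : 0 <= lam * ((w - c) * a).
      by apply: mulr_ge0; [exact: ltW | apply: mulr_ge0 => //; rewrite subr_ge0 ltW].
    have h2 : lam * (w * a) <= lam * L1 by apply: ler_wpM2l => //; exact: ltW.
    nra.
  have hDh : forall i, `|(Dh *m x) i 0| <= TD.
    by move=> i; apply: le_trans (hD i); rewrite absDE; exact: le_abs_sqrt.
  have hDv : forall i, `|(Dv *m x) i 0| <= TD.
    by move=> i; apply: le_trans (hD i); rewrite absDE addrC; exact: le_abs_sqrt.
  rewrite (Hinv x) !addE.
  have b1 := @mul_bound R n m B1 (K *m x) TK j TK0 hK.
  have b2 := @mul_bound R n n B2 (Dh *m x) TD j TD0 hDh.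
  have b3 := @mul_bound R n n B3 (Dv *m x) TD j TD0 hDv.
  have n1 := @ler_normD _ _ ((B1 *m (K *m x)) j 0 + (B2 *m (Dh *m x)) j 0) ((B3 *m (Dv *m x)) j 0).
  have n2 := @ler_normD _ _ ((B1 *m (K *m x)) j 0) ((B2 *m (Dh *m x)) j 0).
  rewrite /M; lra.
have [f [Hf Hc]] := @bw_vec R n (fun k => xstar (k + N)) M Hbnd.
pose g k := (f k + N)%N.
have Hg : forall k, (k <= g k)%N.
  by move=> k; apply: leq_trans (@strict_ge f Hf k) (leq_addr _ _).
pose xbar : 'cV[R]_n := \col_i lim ((fun k => xstar (g k) i 0) @ \oo).
have Hx : @ecvg R n (fun k => xstar (g k)) xbar by move=> i; rewrite mxE; exact: Hc i.
have xbar0 : nonneg_orthant xbar.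
  move=> i; rewrite mxE; apply: limr_ge; first exact: Hc i.
  by apply: filterE => k; exact: ((Hmin (g k)).1.1 i).
have HA : forall i, (fun k => absD Dh Dv (Psi (g k) y) i 0) @ \oo --> absD Dh Dv xGT i 0.
  by move=> i; exact: (@cvg_subseq R g (fun k => absD Dh Dv (Psi k y) i 0) _ Hg (Habs i)).
have Hmin_bar : forall z, nonneg_orthant z ->
    Jfun K Dh Dv lam eta p y xGT xbar <= Jfun K Dh Dv lam eta p y xGT z.
  move=> z z0.
  have c1 : (fun k => Jfun K Dh Dv lam eta p y (Psi (g k) y) (xstar (g k))) @ \oo -->
      Jfun K Dh Dv lam eta p y xGT xbar.
    exact: (@cvg_J R m n K Dh Dv lam eta p y (fun k => Psi (g k) y) xGT
      (fun k => xstar (g k)) xbar eta0 HA Hx).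
  have c2 : (fun k => Jfun K Dh Dv lam eta p y (Psi (g k) y) z) @ \oo -->
      Jfun K Dh Dv lam eta p y xGT z.
    apply: (@cvg_J R m n K Dh Dv lam eta p y (fun k => Psi (g k) y) xGT
      (fun k => z) z eta0 HA).
    by move=> i; exact: cvg_cst.
  have c3 : (fun k => Jfun K Dh Dv lam eta p y (Psi (g k) y) z -
      Jfun K Dh Dv lam eta p y (Psi (g k) y) (xstar (g k))) @ \oo -->
      Jfun K Dh Dv lam eta p y xGT z - Jfun K Dh Dv lam eta p y xGT xbar.
    exact: cvgB.
  have : 0 <= Jfun K Dh Dv lam eta p y xGT z - Jfun K Dh Dv lam eta p y xGT xbar.
    refine (closed_cvg [set x : R | 0 <= x] (@closed_ge R 0) _ _ c3).
    by apply: filterE => k /=; rewrite subr_ge0; exact: ((Hmin (g k)).1.2 z z0).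
  by rewrite subr_ge0.
have Heq : xbar = xstarGT := HminGT.2 xbar (conj xbar0 Hmin_bar).
exists g; split; first by move=> k; rewrite /g ltn_add2r; exact: Hf.
rewrite -Heq.
have Hs : (fun k => \sum_(i < n) `|(xstar (g k) - xbar) i 0|) @ \oo --> \sum_(i < n) (0:R).
  apply: (@cvg_sumO R n (fun i k => `|(xstar (g k) - xbar) i 0|) (fun _ => 0)) => i.
  apply: (@cvg_ext R (fun k => `|xstar (g k) i 0 - xbar i 0|)); first by move=> k; rewrite subE.
  have -> : (0:R) = `|xbar i 0 - xbar i 0| by rewrite subrr normr0.
  by apply: cvg_norm; apply: cvgB; [exact: Hx i | exact: cvg_cst].
by rewrite big1 // in Hs.
Qed.
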